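(* Let $R$ be a commutative Noetherian ring of prime characteristic $p$ and suppose $c$ is a $p^{w_0}$-weak test element for $R$ for some $w_0\in\mathbb{N}_0$. For each ideal $\mathfrak{a}$ of $R$ let $G(\mathfrak{a})=\bigoplus_{n\ge0}R/(\mathfrak{a}^{[p^n]})^F$ be the graded left $R[x,f]$-module with $x(r+(\mathfrak{a}^{[p^n]})^F)=r^p+(\mathfrak{a}^{[p^{n+1}]})^F$, and let $G:=\bigoplus_{\mathfrak{a}}G(\mathfrak{a})$ over all ideals $\mathfrak{a}$ of $R$ (an $x$-torsion-free module). Let $U:=\bigoplus_{\mathfrak{a}}\bigoplus_{n\ge0}(\mathfrak{a}^{[p^n]})^*/(\mathfrak{a}^{[p^n]})^F$. Then (i) $U=\operatorname{ann}_G(\bigoplus_{n\ge0}Rcx^n)$, so $U$ is a special annihilator submodule of $G$; (ii) if $\mathfrak{b}$ is the $G$-special $R$-ideal with $\operatorname{grann}_{R[x,f]}U=\bigoplus_{n\ge0}\mathfrak{b}x^n$, then $\mathfrak{b}$ is the smallest member of $\mathcal{I}(G)$ of positive height.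
   Context: $R[x,f]$ is the Frobenius skew polynomial ring: free left $R$-module on $(x^i)_{i\ge0}$, $xr=r^px$. The Frobenius closure is $\mathfrak{a}^F=\{r: r^{p^n}\in\mathfrak{a}^{[p^n]}\text{ for some }n\}$, where $\mathfrak{a}^{[p^n]}$ is generated by $p^n$-th powers. $\operatorname{ann}_G\mathfrak{B}$, for a graded two-sided ideal $\mathfrak{B}=\bigoplus\mathfrak{b}_nx^n$ ($(\mathfrak{b}_n)$ ascending), is the set of elements killed by $\mathfrak{B}$; special annihilator submodules are those of this form. $\operatorname{grann}N$ is the set of $\sum r_ix^i$ with each $r_ix^i$ annihilating $N$. An ideal $\mathfrak{b}$ is $G$-special if $\operatorname{grann}N=\bigoplus_n\mathfrak{b}x^n$ for some submodule $N$; $\mathcal{I}(G)$ is the set of these; $R$ has infinite height. $R^\circ$, tight closure $\mathfrak{a}^*$ as usual. A $p^{w_0}$-weak test element is $c\in R^\circ$ such that for every ideal $\mathfrak{b}$ and $r\in R$: $r\in\mathfrak{b}^*$ iff $cr^{p^n}\in\mathfrak{b}^{[p^n]}$ for all $n\ge w_0$. *)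

(* Defs.v *)
From Stdlib Require List.
From HB Require Import structures.
From mathcomp Require Import all_boot all_order all_algebra.
Set Implicit Arguments. Unset Strict Implicit. Unset Printing Implicit Defensive.
Import GRing.Theory.
Local Open Scope ring_scope.

Section FrobeniusDefs.
Variable R : comNzRingType.

Definition is_ideal (I : R -> Prop) : Prop :=
  [/\ I 0, (forall x y, I x -> I y -> I (x + y)) & (forall r x, I x -> I (r * x))].

Definition noetherian : Prop :=
  forall I : nat -> R -> Prop, (forall n, is_ideal (I n)) ->
    (forall n x, I n x -> I n.+1 x) ->
    exists N, forall n x, (N <= n)%N -> I n x -> I N x.

Definition prime_ideal (P : R -> Prop) : Prop :=
  [/\ is_ideal P, ~ P 1 & forall x y, P (x * y) -> P x \/ P y].

Definition minimal_prime (P : R -> Prop) : Prop :=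
  prime_ideal P /\
  forall Q, prime_ideal Q -> (forall x, Q x -> P x) -> forall x, P x -> Q x.

Definition Rcirc (c : R) : Prop := forall P, minimal_prime P -> ~ P c.

Definition gen_ideal (S : R -> Prop) (r : R) : Prop :=
  exists s : seq (R * R), (forall z, z \in s -> S z.2) /\
    r = \sum_(z <- s) z.1 * z.2.

Definition frob_pow (p : nat) (I : R -> Prop) (e : nat) : R -> Prop :=
  gen_ideal (fun y => exists2 x, I x & y = x ^+ (p ^ e)%N).

Definition frob_cl (p : nat) (I : R -> Prop) (r : R) : Prop :=
  exists n, frob_pow p I n (r ^+ (p ^ n)%N).

Definition tight_cl (p : nat) (I : R -> Prop) (r : R) : Prop :=
  exists2 c, Rcirc c &
    exists e0, forall e, (e0 <= e)%N -> frob_pow p I e (c * r ^+ (p ^ e)%N).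

Definition weak_test_element (p w0 : nat) (c : R) : Prop :=
  Rcirc c /\
  forall b, is_ideal b -> forall r,
    tight_cl p b r <-> (forall n, (w0 <= n)%N -> frob_pow p b n (c * r ^+ (p ^ n)%N)).

(* positive height: every prime containing b has height >= 1
   (vacuous for b = R, which has infinite height) *)
Definition ht_pos (b : R -> Prop) : Prop :=
  forall P, prime_ideal P -> (forall x, b x -> P x) ->
    exists Q, [/\ prime_ideal Q, (forall x, Q x -> P x) & exists x, P x /\ ~ Q x].

Definition Idl : Type := {I : R -> Prop | is_ideal I}.

(* An element of G = (+)_a (+)_n R/(a^[p^n])^F, given by representatives of
   its components g a n; Gel is the ambient type of such families. *)
Definition Gel : Type := Idl -> nat -> R.

Variable p : nat.

Definition Gden (a : Idl) (n : nat) : R -> Prop := frob_cl p (frob_pow p (proj1_sig a) n).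

Definition inG (g : Gel) : Prop :=
  exists l : list (Idl * nat), forall a n, ~ List.In (a, n) l -> Gden a n (g a n).

Definition Gzero (g : Gel) : Prop := forall a n, Gden a n (g a n).

Definition Geq (g h : Gel) : Prop := Gzero (fun a n => g a n - h a n).

(* action of r x^m : component n maps to component n+m, s |-> r s^(p^m) *)
Definition act (r : R) (m : nat) (g : Gel) : Gel :=
  fun a n => if (m <= n)%N then r * g a (n - m)%N ^+ (p ^ m)%N else 0.

(* ann_G (B) for a graded ideal B = (+)_n B n x^n *)
Definition ann_G (B : nat -> R -> Prop) (g : Gel) : Prop :=
  inG g /\ forall n r, B n r -> Gzero (act r n g).

(* (+)_n b_n x^n is a graded two-sided ideal with (b_n) ascending *)
Definition graded_twosided (B : nat -> R -> Prop) : Prop :=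
  [/\ forall n, is_ideal (B n),
      (forall n x, B n x -> B n.+1 x) &
      (forall n x, B n x -> B n.+1 (x ^+ p))].

Definition special_ann (N : Gel -> Prop) : Prop :=
  exists B, graded_twosided B /\ forall g, N g <-> ann_G B g.

(* R[x,f]-submodules of G (saturated w.r.t. equality in G) *)
Definition submodule (N : Gel -> Prop) : Prop :=
  [/\ (forall g, N g -> inG g),
      (forall g h, N g -> inG h -> Geq g h -> N h),
      N (fun _ _ => 0),
      (forall g h, N g -> N h -> N (fun a n => g a n + h a n)) &
      (forall r m g, N g -> N (act r m g))].

(* grann N = (+)_n b x^n *)
Definition grann_is (N : Gel -> Prop) (b : R -> Prop) : Prop :=
  forall n r, (forall g, N g -> Gzero (act r n g)) <-> b r.

Definition IG (b : R -> Prop) : Prop :=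
  is_ideal b /\ exists N, submodule N /\ grann_is N b.

Definition Usub (g : Gel) : Prop :=
  inG g /\ forall a n, tight_cl p (frob_pow p (proj1_sig a) n) (g a n).

End FrobeniusDefs.

(* Main.v *)
Require Import Defs.
From HB Require Import structures.
From mathcomp Require Import all_boot all_order all_algebra.
From Stdlib Require Import Classical ClassicalEpsilon.
From mathcomp Require Import ring.
Set Implicit Arguments. Unset Strict Implicit. Unset Printing Implicit Defensive.
Import GRing.Theory.
Local Open Scope ring_scope.

Section Basics.
Variable R : comNzRingType.
Variable p : nat.
Hypothesis chp : p \in [pchar R].

Lemma frobD k (x y : R) : (x + y) ^+ (p ^ k) = x ^+ (p ^ k) + y ^+ (p ^ k).
Proof.
elim: k => [|k IH]; first by rewrite expn0 !expr1.
by rewrite !expnSr !exprM IH -!(pFrobenius_autE chp) rmorphD.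
Qed.

Lemma frobN k (x : R) : (- x) ^+ (p ^ k) = - x ^+ (p ^ k).
Proof.
elim: k => [|k IH]; first by rewrite expn0 !expr1.
by rewrite !expnSr !exprM IH -!(pFrobenius_autE chp) pFrobenius_autN.
Qed.

Lemma pgt0 : (0 < p)%N.
Proof. exact: prime_gt0 (pcharf_prime chp). Qed.

Lemma zeroX k : (0 : R) ^+ (p ^ k) = 0.
Proof. by rewrite expr0n gtn_eqF // expn_gt0 pgt0. Qed.

Lemma frob_sum k (s : seq (R * R)) :
  (\sum_(z <- s) z.1 * z.2) ^+ (p ^ k) =
  \sum_(z <- s) (z.1 ^+ (p ^ k)) * (z.2 ^+ (p ^ k)).
Proof.
elim: s => [|z s IH]; first by rewrite !big_nil zeroX.
by rewrite !big_cons frobD IH exprMn.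
Qed.

Lemma frobX m n (x : R) : (x ^+ (p ^ m)) ^+ (p ^ n) = x ^+ (p ^ (m + n)).
Proof. by rewrite -exprM expnD. Qed.

Lemma id0 (J : R -> Prop) : is_ideal J -> J 0. Proof. by case. Qed.
Lemma idD (J : R -> Prop) x y : is_ideal J -> J x -> J y -> J (x + y).
Proof. by case=> _ H _; apply: H. Qed.
Lemma idM (J : R -> Prop) r x : is_ideal J -> J x -> J (r * x).
Proof. by case=> _ _ H; apply: H. Qed.

Lemma gen0 (S : R -> Prop) : gen_ideal S 0.
Proof. by exists [::]; rewrite big_nil. Qed.

Lemma genD (S : R -> Prop) x y : gen_ideal S x -> gen_ideal S y -> gen_ideal S (x + y).
Proof.
move=> [s1 [H1 ->]] [s2 [H2 ->]]; exists (s1 ++ s2); split; last by rewrite big_cat.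
by move=> z; rewrite mem_cat => /orP [/H1|/H2].
Qed.

Lemma genM (S : R -> Prop) r x : gen_ideal S x -> gen_ideal S (r * x).
Proof.
move=> [s [H ->]]; exists [seq (r * z.1, z.2) | z <- s]; split.
  by move=> z /mapP [w /H Hw ->].
by rewrite big_map mulr_sumr; apply: eq_bigr => z _; rewrite mulrA.
Qed.

Lemma gen_in (S : R -> Prop) y : S y -> gen_ideal S y.
Proof.
move=> Hy; exists [:: (1, y)]; split; first by move=> z; rewrite inE => /eqP ->.
by rewrite big_cons big_nil mul1r addr0.
Qed.

Lemma gen_is_ideal (S : R -> Prop) : is_ideal (gen_ideal S).
Proof. split; [exact: gen0 | exact: genD | exact: genM]. Qed.

Lemma ideal_sum (J : R -> Prop) (s : seq (R * R)) : is_ideal J ->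
  (forall z, z \in s -> J z.2) -> J (\sum_(z <- s) z.1 * z.2).
Proof.
move=> [J0 JD JM]; elim: s => [|z s IH] H; first by rewrite big_nil.
rewrite big_cons; apply: JD; first by apply: JM; apply: H; rewrite inE eqxx.
by apply: IH => w Hw; apply: H; rewrite inE Hw orbT.
Qed.

Lemma gen_sub (S J : R -> Prop) : is_ideal J -> (forall y, S y -> J y) ->
  forall x, gen_ideal S x -> J x.
Proof. by move=> HJ HS x [s [Hs ->]]; apply: ideal_sum => // z /Hs /HS. Qed.

Lemma gen_mono (S T : R -> Prop) : (forall y, S y -> T y) ->
  forall x, gen_ideal S x -> gen_ideal T x.
Proof. move=> H; apply: gen_sub; first exact: gen_is_ideal. by move=> y /H; apply: gen_in. Qed.

Lemma gen_frob (S : R -> Prop) k x : gen_ideal S x ->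
  gen_ideal (fun y => exists2 s, S s & y = s ^+ (p ^ k)) (x ^+ (p ^ k)).
Proof.
move=> [s [Hs ->]]; rewrite frob_sum.
exists [seq (z.1 ^+ (p ^ k), z.2 ^+ (p ^ k)) | z <- s]; split.
  by move=> z /mapP [w /Hs Hw ->] /=; exists w.2.
by rewrite big_map.
Qed.

Lemma fp_in (I : R -> Prop) e x : I x -> frob_pow p I e (x ^+ (p ^ e)).
Proof. by move=> Hx; apply: gen_in; exists x. Qed.

Lemma fp_ideal (I : R -> Prop) e : is_ideal (frob_pow p I e).
Proof. exact: gen_is_ideal. Qed.

Lemma fp_comp1 (I : R -> Prop) m n x :
  frob_pow p (frob_pow p I m) n x -> frob_pow p I (m + n) x.
Proof.
apply: gen_sub; first exact: fp_ideal.
move=> y [z Hz ->]; move: (gen_frob n Hz); apply: gen_mono.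
by move=> w [s [u Hu ->] ->]; exists u; rewrite // frobX.
Qed.

Lemma fp_comp2 (I : R -> Prop) m n x :
  frob_pow p I (m + n) x -> frob_pow p (frob_pow p I m) n x.
Proof.
apply: gen_mono => y [u Hu ->]; exists (u ^+ (p ^ m)); first exact: fp_in.
by rewrite frobX.
Qed.

Lemma fp_frob (I : R -> Prop) m n y :
  frob_pow p I m y -> frob_pow p I (m + n) (y ^+ (p ^ n)).
Proof. by move=> H; apply: fp_comp1; apply: fp_in. Qed.

Lemma fp_eq (I : R -> Prop) m n x : m = n -> frob_pow p I m x -> frob_pow p I n x.
Proof. by move=> ->. Qed.

Lemma fc_ideal (J : R -> Prop) : is_ideal (frob_cl p J).
Proof.
split.
- by exists 0%N; rewrite zeroX; apply: gen0.
- move=> x y [n1 H1] [n2 H2]; exists (n1 + n2)%N; rewrite frobD.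
  apply: (idD (fp_ideal J (n1 + n2))).
    by rewrite -frobX; apply: fp_frob.
  by rewrite addnC -frobX; apply: fp_frob.
- move=> r x [n H]; exists n; rewrite exprMn; exact: (idM _ (fp_ideal J n)).
Qed.

Lemma fc_in (J : R -> Prop) x : J x -> frob_cl p J x.
Proof. by move=> H; exists 0%N; apply: fp_in. Qed.

Lemma Rcirc1 : Rcirc (1 : R).
Proof. by move=> P [[_ H1 _] _]. Qed.

Lemma RcircM (x y : R) : Rcirc x -> Rcirc y -> Rcirc (x * y).
Proof.
move=> Hx Hy P HP; have [[_ _ Hpr] _] := HP.
by move=> /Hpr [/(Hx P HP)|/(Hy P HP)].
Qed.

Lemma RcircX (x : R) n : Rcirc x -> Rcirc (x ^+ n).
Proof.
move=> Hx; elim: n => [|n IH]; first by rewrite expr0; exact: Rcirc1.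
by rewrite exprS; apply: RcircM.
Qed.

Lemma tc_ideal (J : R -> Prop) : is_ideal (tight_cl p J).
Proof.
split.
- exists 1; first exact: Rcirc1.
  by exists 0%N => e _; rewrite zeroX mulr0; apply: gen0.
- move=> x y [c1 Hc1 [e1 H1]] [c2 Hc2 [e2 H2]].
  exists (c1 * c2); first exact: RcircM.
  exists (maxn e1 e2) => e He; rewrite frobD mulrDr.
  have He1 : (e1 <= e)%N by apply: leq_trans He; apply: leq_maxl.
  have He2 : (e2 <= e)%N by apply: leq_trans He; apply: leq_maxr.
  apply: (idD (fp_ideal J e)).
    by rewrite [c1 * c2]mulrC -mulrA; apply: (idM _ (fp_ideal J e)); apply: H1.
  by rewrite -mulrA; apply: (idM _ (fp_ideal J e)); apply: H2.
- move=> r x [c1 Hc1 [e1 H1]]; exists c1 => //; exists e1 => e He.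
  by rewrite exprMn mulrA [c1 * _]mulrC -mulrA; apply: (idM _ (fp_ideal J e)); apply: H1.
Qed.

Lemma tc_opp (J : R -> Prop) x : tight_cl p J x -> tight_cl p J (- x).
Proof. by move=> H; rewrite -mulN1r; apply: (idM _ (tc_ideal J)). Qed.

Lemma fc_tc (J : R -> Prop) z : frob_cl p J z -> tight_cl p J z.
Proof.
move=> [n Hn]; exists 1; first exact: Rcirc1.
exists n => e He; rewrite mul1r -(subnKC He) -frobX; exact: fp_frob.
Qed.

End Basics.

Section Main.
Variable R : comNzRingType.
Variable p : nat.
Hypothesis chp : p \in [pchar R].
Variable c : R.
Variable w0 : nat.
Hypothesis Hw : weak_test_element p w0 c.

Lemma tc_to_fc (I : R -> Prop) m g : tight_cl p (frob_pow p I m) g ->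
  forall n, frob_cl p (frob_pow p I (m + n)) (c * g ^+ (p ^ n)).
Proof.
move=> Hg n; have [_ W] := Hw.
have := (W _ (fp_ideal p I m) g).1 Hg (n + w0)%N (leq_addl _ _).
move=> /(fp_comp1 chp); rewrite addnA => /fp_comp2 H.
exists w0; rewrite exprMn frobX.
have Hq : (0 < p ^ w0)%N by rewrite expn_gt0 (pgt0 chp).
rewrite -(prednK Hq) exprSr -mulrA.
exact: (idM _ (fp_ideal _ _ _)).
Qed.

Lemma fc_to_tc (I : R -> Prop) m g d : Rcirc d ->
  (forall n, frob_cl p (frob_pow p I (m + n)) (d * g ^+ (p ^ n))) ->
  tight_cl p (frob_pow p I m) g.
Proof.
move=> Hd H; have [Hc W] := Hw.
exists (c * d ^+ (p ^ w0)); first by apply: RcircM => //; apply: RcircX.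
exists w0 => e He.
have T := fc_tc chp (H (e - w0)%N).
have := (W _ (fp_ideal p I (m + (e - w0))) _).1 T w0 (leqnn _).
move=> /(fp_comp1 chp); rewrite -addnA subnK // => /fp_comp2.
by rewrite exprMn frobX subnK // mulrA.
Qed.

End Main.

Section Shift.
Variable R : comNzRingType.
Variable p : nat.
Hypothesis chp : p \in [pchar R].

Lemma fc_shift (I : R -> Prop) j m z : frob_cl p (frob_pow p I j) z ->
  frob_cl p (frob_pow p I (j + m)) (z ^+ (p ^ m)).
Proof.
move=> [n Hn]; exists n; rewrite frobX (addnC m n) -frobX.
have e : (j + (n + m) = (j + m) + n)%N by rewrite (addnC n m) addnA.
by move: (fp_frob chp m Hn) => /(fp_comp1 chp) /(fp_eq e) /fp_comp2.
Qed.

Lemma tc_shift (I : R -> Prop) j m z : tight_cl p (frob_pow p I j) z ->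
  tight_cl p (frob_pow p I (j + m)) (z ^+ (p ^ m)).
Proof.
move=> [d Hd [e0 H]]; exists d => //; exists e0 => e He.
have := H (m + e)%N (leq_trans He (leq_addl _ _)).
by rewrite frobX => /(fp_comp1 chp); rewrite addnA => /fp_comp2.
Qed.

Lemma act0 (g : Gel R) a k r : act p r 0 g a k = r * g a k.
Proof. by rewrite /act leq0n subn0 expn0 expr1. Qed.

Lemma Usub_submodule : submodule p (@Usub R p).
Proof.
split.
- by move=> g [].
- move=> g h [_ Hg] Hh Heq; split => // a n.
  have -> : h a n = g a n - (g a n - h a n) by rewrite opprB addrCA subrr addr0.
  exact: (idD (tc_ideal chp _) (Hg a n) (tc_opp chp (fc_tc chp (Heq a n)))).
- split; first by exists [::] => a n _; exact: (id0 (fc_ideal chp _)).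
  by move=> a n; exact: (id0 (tc_ideal chp _)).
- move=> g h [[l1 H1] T1] [[l2 H2] T2]; split.
    exists (l1 ++ l2) => a n Hn; apply: (idD (fc_ideal chp _)).
      by apply: H1 => Hin; apply: Hn; apply: List.in_or_app; left.
    by apply: H2 => Hin; apply: Hn; apply: List.in_or_app; right.
  by move=> a n; exact: (idD (tc_ideal chp _) (T1 a n) (T2 a n)).
- move=> r m g [[l H] T]; split.
    exists (List.map (fun z : Idl R * nat => (z.1, (z.2 + m)%N)) l) => a k Hk.
    rewrite /act; case: leqP => Hmk; last exact: (id0 (fc_ideal chp _)).
    apply: (idM _ (fc_ideal chp _)).
    have Hn : ~ List.In (a, (k - m)%N) l.
      move=> Hin; apply: Hk.
      have := List.in_map (fun z : Idl R * nat => (z.1, (z.2 + m)%N)) _ _ Hin.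
      by rewrite /= subnK.
    by have := fc_shift m (H _ _ Hn); rewrite subnK.
  move=> a k; rewrite /act; case: leqP => Hmk; last exact: (id0 (tc_ideal chp _)).
  apply: (idM _ (tc_ideal chp _)).
  by have := tc_shift m (T a (k - m)%N); rewrite subnK.
Qed.

End Shift.

Section Part1.
Variable R : comNzRingType.
Variable p : nat.
Hypothesis chp : p \in [pchar R].
Variable c : R.
Variable w0 : nat.
Hypothesis Hw : weak_test_element p w0 c.

Definition Bc (n : nat) (r : R) : Prop := exists s, r = s * c.

Lemma part1_fwd (g : Gel R) : Usub p g -> ann_G p Bc g.
Proof.
move=> [HG HT]; split => // n r [s ->] a k; rewrite /act /Gden.
case: leqP => Hnk; last exact: (id0 (fc_ideal chp _)).
have := tc_to_fc chp Hw (HT a (k - n)%N) n; rewrite subnK // => H.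
by rewrite -mulrA; apply: (idM _ (fc_ideal chp _)).
Qed.

Lemma part1_bwd (g : Gel R) : ann_G p Bc g -> Usub p g.
Proof.
move=> [HG HA]; split => // a m.
apply: (fc_to_tc chp Hw (d:=c) Hw.1) => n.
have := HA n c (ex_intro _ 1 (esym (mul1r c))) a (m + n)%N.
by rewrite /act /Gden leq_addl addnK.
Qed.

Lemma part1_special : special_ann p (@Usub R p).
Proof.
exists Bc; split; last by move=> g; split; [apply: part1_fwd | apply: part1_bwd].
split.
- move=> n; split; first by exists 0; rewrite mul0r.
    by move=> x y [s1 ->] [s2 ->]; exists (s1 + s2); rewrite mulrDl.
  by move=> r x [s ->]; exists (r * s); rewrite mulrA.
- by move=> n x H.
- move=> n x [s ->]; exists (s ^+ p * c ^+ p.-1).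
  by rewrite exprMn -mulrA -exprSr prednK // (pgt0 chp).
Qed.

End Part1.

Section Noeth.
Variable R : comNzRingType.

Definition ext (I : R -> Prop) (a : R) (z : R) : Prop :=
  exists i r, I i /\ z = i + r * a.

Lemma ext_ideal I a : is_ideal I -> is_ideal (ext I a).
Proof.
move=> HI; split.
- by exists 0, 0; split; [exact: id0 | rewrite mul0r addr0].
- move=> x y [i1 [r1 [H1 ->]]] [i2 [r2 [H2 ->]]]; exists (i1 + i2), (r1 + r2).
  by split; [exact: idD | rewrite mulrDl addrACA].
- move=> r x [i [s [H ->]]]; exists (r * i), (r * s).
  by split; [exact: idM | rewrite mulrDr mulrA].
Qed.

Lemma ext_sub I a x : I x -> ext I a x.
Proof. by move=> H; exists x, 0; rewrite mul0r addr0. Qed.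

Lemma ext_a I a : is_ideal I -> ext I a a.
Proof. by move=> HI; exists 0, 1; split; [exact: id0 | rewrite mul1r add0r]. Qed.

Definition Pgood (I : R -> Prop) : Prop :=
  exists Ps : list (R -> Prop),
    (forall Q, List.In Q Ps -> prime_ideal Q /\ forall x, I x -> Q x) /\
    forall x, (forall Q, List.In Q Ps -> Q x) -> exists n, I (x ^+ n).

Lemma step I : is_ideal I -> ~ Pgood I ->
  exists I', [/\ is_ideal I', (forall x, I x -> I' x),
                 (exists x, I' x /\ ~ I x) & ~ Pgood I'].
Proof.
move=> HI HG.
have H1 : ~ I 1.
  by move=> I1; apply: HG; exists nil; split => // x _; exists 0%N; rewrite expr0.
have Hnp : ~ prime_ideal I.
  move=> HP; apply: HG; exists (I :: nil); split.
    by move=> Q [<-|[]]; split.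
  by move=> x H; exists 1%N; rewrite expr1; apply: H; left.
have [a [b [Hab [Ha Hb]]]] : exists a b, I (a * b) /\ ~ I a /\ ~ I b.
  apply: NNPP => Hn; apply: Hnp; split => // x y Hxy.
  apply: NNPP => Hc; apply: Hn; exists x, y; split => //.
  by split => Hx; apply: Hc; [left|right].
case: (classic (Pgood (ext I a))) => Ga; last first.
  exists (ext I a); split => //; [exact: ext_ideal | exact: ext_sub|].
  by exists a; split => //; apply: ext_a.
case: (classic (Pgood (ext I b))) => Gb; last first.
  exists (ext I b); split => //; [exact: ext_ideal | exact: ext_sub|].
  by exists b; split => //; apply: ext_a.
exfalso; apply: HG.
move: Ga Gb => [Psa [Ha1 Ha2]] [Psb [Hb1 Hb2]].
exists (Psa ++ Psb); split.
  move=> Q HQ0; case: (List.in_app_or _ _ _ HQ0) => [/Ha1|/Hb1] [HQ HI']; split => // x Hx; apply: HI'; exact: ext_sub.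
move=> x Hx.
have [n [i1 [r1 [Hi1 E1]]]] := Ha2 x (fun Q HQ => Hx Q (List.in_or_app _ _ _ (or_introl HQ))).
have [m [i2 [r2 [Hi2 E2]]]] := Hb2 x (fun Q HQ => Hx Q (List.in_or_app _ _ _ (or_intror HQ))).
exists (n + m)%N; rewrite exprD E1 E2.
have -> : (i1 + r1 * a) * (i2 + r2 * b) =
  (i2 + r2 * b) * i1 + (r1 * a) * i2 + (r1 * r2) * (a * b).
  by ring.
by apply: idD => //; [apply: idD => //; apply: idM | apply: idM].
Qed.

Definition Tn := {J : R -> Prop | is_ideal J /\ ~ Pgood J}.

Lemma pgood_all I : noetherian R -> is_ideal I -> Pgood I.
Proof.
move=> HN HI; apply: NNPP => HG.
have Hstep : forall u : Tn, exists v : Tn, (forall x, sval u x -> sval v x) /\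
                                         exists x, sval v x /\ ~ sval u x.
  move=> [J [HJ GJ]]; have [J' [HJ' S1 S2 G']] := step HJ GJ.
  by exists (exist _ J' (conj HJ' G')).
pose f (u : Tn) : Tn := proj1_sig (constructive_indefinite_description _ (Hstep u)).
have Hf u : (forall x, sval u x -> sval (f u) x) /\ exists x, sval (f u) x /\ ~ sval u x.
  exact: (proj2_sig (constructive_indefinite_description _ (Hstep u))).
pose u0 : Tn := exist _ I (conj HI HG).
pose ch n := iter n f u0.
have [N HN'] := HN (fun n => sval (ch n)) (fun n => (proj2_sig (ch n)).1)
                  (fun n x => (Hf (ch n)).1 x).
have [x [Hx1 Hx2]] := (Hf (ch N)).2.
by apply: Hx2; apply: (HN' N.+1 x (leqnSn N)).
Qed.

Lemma nil_primes : noetherian R -> exists Ps : list (R -> Prop),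
  (forall Q, List.In Q Ps -> prime_ideal Q) /\
  forall x, (forall Q, List.In Q Ps -> Q x) -> exists n, x ^+ n = 0.
Proof.
move=> HN.
have HI : is_ideal (fun x : R => x = 0).
  by split => //; [move=> x y -> ->; rewrite addr0 | move=> r x ->; rewrite mulr0].
have [Ps [H1 H2]] := pgood_all HN HI.
by exists Ps; split => // Q /H1 [].
Qed.

Lemma prime_pow (P : R -> Prop) x n : prime_ideal P -> P (x ^+ n) -> P x.
Proof.
move=> [_ P1 Pp]; elim: n => [|n IH]; first by rewrite expr0.
by rewrite exprS => /Pp [] // /IH.
Qed.

Lemma prod_avoid (P : R -> Prop) (C : (R -> Prop) -> Prop) (Qs : list (R -> Prop)) :
  prime_ideal P ->
  (forall Q, List.In Q Qs -> C Q -> is_ideal Q /\ exists x, Q x /\ ~ P x) ->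
  exists w, ~ P w /\ forall Q, List.In Q Qs -> C Q -> Q w.
Proof.
move=> HP; elim: Qs => [|Q Qs IH] H.
  by exists 1; split => //; case: HP.
have [w [Hw HQs]] : exists w, ~ P w /\ forall Q, List.In Q Qs -> C Q -> Q w.
  by apply: IH => Q' HQ'; apply: H; right.
case: (classic (C Q)) => CQ; last first.
  by exists w; split => // Q' [<-|HQ'] CQ'; [contradiction | apply: HQs].
have [HQ [x [Qx Px]]] := H Q (or_introl erefl) CQ.
exists (w * x); split.
  by have [_ _ Pp] := HP; move=> /Pp [].
move=> Q' [<-|HQ'] CQ'; first exact: idM.
rewrite mulrC; apply: idM; first by have [] := H Q' (or_intror HQ') CQ'.
exact: HQs.
Qed.

Lemma minimal_in (Ps : list (R -> Prop)) P :
  (forall Q, List.In Q Ps -> prime_ideal Q) ->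
  (forall x, (forall Q, List.In Q Ps -> Q x) -> exists n, x ^+ n = 0) ->
  minimal_prime P -> exists Q, List.In Q Ps /\ forall x, Q x <-> P x.
Proof.
move=> HPs Hnil [HP Hmin].
case: (classic (exists Q, List.In Q Ps /\ forall x, Q x -> P x)) => [[Q [HQ Hsub]]|Hno].
  exists Q; split => // x; split; first exact: Hsub.
  exact: (Hmin Q (HPs Q HQ) Hsub).
have [w [Pw Hw]] : exists w, ~ P w /\ forall Q, List.In Q Ps -> True -> Q w.
  apply: (prod_avoid (C := fun _ => True)) => // Q HQ _; split; first by case: (HPs Q HQ).
  apply: NNPP => Hn; apply: Hno; exists Q; split => // x Qx.
  by apply: NNPP => Px; apply: Hn; exists x.
have [n Hn] := Hnil w (fun Q HQ => Hw Q HQ I).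
by exfalso; apply: Pw; apply: (prime_pow (n := n) HP); rewrite Hn; case: HP => [[]].
Qed.

Lemma avoid (Qs : list (R -> Prop)) (J : R -> Prop) : is_ideal J ->
  (forall P, minimal_prime P -> exists y, J y /\ ~ P y) ->
  exists x, J x /\ forall Q, List.In Q Qs -> minimal_prime Q -> ~ Q x.
Proof.
move=> HJ HM; elim: Qs => [|Q Qs [x [Jx Hx]]].
  by exists 0; split => //; exact: id0.
case: (classic (minimal_prime Q /\ Q x)) => [[MQ Qx]|Hc]; last first.
  exists x; split => // Q' [<-|HQ'] MQ'; last exact: Hx.
  by move=> Qx; apply: Hc.
case: (classic (exists Q', List.In Q' Qs /\ minimal_prime Q' /\ forall z, Q' z -> Q z))
  => [[Q' [HQ' [MQ' Hsub]]]|Hno].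
  by exfalso; apply: (Hx Q' HQ' MQ'); apply: (MQ.2 Q' MQ'.1 Hsub).
have [w [Qw Hw]] : exists w, ~ Q w /\ forall Q', List.In Q' Qs -> minimal_prime Q' -> Q' w.
  apply: (@prod_avoid Q (@minimal_prime R) Qs) => [|Q' HQ' MQ']; first exact: MQ.1.
  split; first by case: MQ'.1.
  apply: NNPP => Hn; apply: Hno; exists Q'; split => //; split => // z Q'z.
  by apply: NNPP => Qz; apply: Hn; exists z.
have [z [Jz Qz]] := HM Q MQ.
have [[HQi _ Qp] _] := MQ.
exists (x + w * z); split; first by apply: idD => //; apply: idM.
move=> Q' [<-|HQ'] MQ' Hy.
  have : Q (w * z).
    have -> : w * z = (x + w * z) + (-1) * x by rewrite mulN1r addrAC subrr add0r.
    by apply: (idD HQi Hy); apply: (idM _ HQi).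
  by move=> /Qp [].
have [[HQi' _ _] _] := MQ'.
apply: (Hx Q' HQ' MQ').
have -> : x = (x + w * z) + (-1) * (z * w) by rewrite mulN1r [z * w]mulrC addrK.
apply: (idD HQi' Hy); apply: (idM _ HQi'); exact: (idM z HQi' (Hw Q' HQ' MQ')).
Qed.

Lemma Rcirc_in_ideal (J : R -> Prop) : noetherian R -> is_ideal J -> ht_pos J ->
  exists x, J x /\ Rcirc x.
Proof.
move=> HN HJ Hht.
have [Ps [HPs Hnil]] := nil_primes HN.
have HM : forall P, minimal_prime P -> exists y, J y /\ ~ P y.
  move=> P [HP Hmin]; apply: NNPP => Hn.
  have Hsub : forall y, J y -> P y.
    by move=> y Jy; apply: NNPP => Py; apply: Hn; exists y.
  have [Q [HQ HQP [x [Px Qx]]]] := Hht P HP Hsub.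
  by apply: Qx; apply: (Hmin Q HQ HQP).
have [x [Jx Hx]] := avoid Ps HJ HM.
exists x; split => // P MP Px.
have [Q [HQ HQP]] := minimal_in HPs Hnil MP.
apply: (Hx Q HQ); last by apply/HQP.
split; first exact: HPs.
move=> Q' HQ' Hsub y Qy.
have [_ Hmin] := MP.
by apply: (Hmin Q' HQ') => [z /Hsub /HQP //|]; apply/HQP.
Qed.

End Noeth.

Theorem theorem2p7 (R : comNzRingType) (p : nat) (c : R) (w0 : nat) :
  prime p -> p \in [pchar R] -> noetherian R -> weak_test_element p w0 c ->
  ((forall g, @Usub R p g <-> ann_G p (fun n r => exists s, r = s * c) g)
     /\ special_ann p (@Usub R p))
  /\
  (forall b : R -> Prop, grann_is p (@Usub R p) b ->
     [/\ IG p b, ht_pos b &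
         forall b', IG p b' -> ht_pos b' -> forall x, b x -> b' x]).
Proof.
move=> Hp chp HN Hw.
have P1 : forall g, Usub p g <-> ann_G p (fun n r => exists s, r = s * c) g.
  by move=> g; split; [apply: (part1_fwd chp Hw) | apply: (part1_bwd chp Hw)].
split; first by split => //; exact: (part1_special chp Hw).
move=> b Hb.
have gr0 : forall r, b r <-> forall g, Usub p g -> Gzero p (act p r 0 g).
  by move=> r; apply: iff_sym; apply: Hb.
have bc : b c.
  apply/gr0 => g Hg; have [_ H] := (P1 g).1 Hg.
  exact: (H 0%N c (ex_intro _ 1 (esym (mul1r c)))).
have Hib : is_ideal b.
  split.
  - by apply/gr0 => g _ a k; rewrite act0 mul0r; exact: (id0 (fc_ideal chp _)).
  - move=> x y /gr0 Hx /gr0 Hy; apply/gr0 => g Hg a k; rewrite act0 mulrDl.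
    apply: (idD (fc_ideal chp _)); [have := Hx g Hg a k | have := Hy g Hg a k];
      by rewrite act0.
  - move=> r x /gr0 Hx; apply/gr0 => g Hg a k; rewrite act0 -mulrA.
    apply: (idM _ (fc_ideal chp _)); have := Hx g Hg a k; by rewrite act0.
split.
- split => //; exists (@Usub R p); split => //; exact: (Usub_submodule chp).
- move=> P HP Hsub; have Pc := Hsub c bc.
  have nm : ~ minimal_prime P := fun M => Hw.1 P M Pc.
  apply: NNPP => Hn; apply: nm; split => // Q HQ HQP x Px.
  by apply: NNPP => Qx; apply: Hn; exists Q; split => //; exists x; split.
- move=> b' [Hib' [N [HNsub HNgr]]] Hht x bx.
  have [d [b'd Rd]] := Rcirc_in_ideal HN Hib' Hht.
  have NU : forall g, N g -> Usub p g.
    move=> g Ng; have [HinG _ _ _ _] := HNsub; split; first exact: HinG.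
    move=> a m; apply: (fc_to_tc chp Hw (d:=d) Rd) => n.
    have := (HNgr n d).2 b'd g Ng a (m + n)%N.
    by rewrite /act /Gden leq_addl addnK.
  apply/(HNgr 0%N x) => g Ng; exact: ((Hb 0%N x).2 bx g (NU g Ng)).
Qed.
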